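(* Assume that $\wp(\phi):=\int_0^\phi g(s)\,ds\to\infty$ as $\phi\to\infty$. Then there is a constant $c$ depending only on the initial data and on $\kappa$ such that every solution satisfies $\|\phi\|_{L^\infty}\le c$.
   Context: $(M,\mathbf{g},\phi)$ is an asymptotically flat solution of the $2+1$ equivariant Einstein-wave map system ($\kappa>0$, target $d\rho^2+g(\rho)^2d\theta^2$, $g$ smooth odd with $g'(0)=1$, $\phi=\rho\circ\Phi\ge0$ with $\phi=0$ on the axis), written in coordinates $(t,r,\theta)$, $-1\le t<0$, with $\mathbf{g}=-e^{2\alpha}dt^2+e^{2\beta}dr^2+r^2d\theta^2$, $\alpha=\beta=0$ on the axis, and with conserved finite energy $E=2\pi\int_0^\infty\tfrac12(e^{-2\alpha}\phi_t^2+e^{-2\beta}\phi_r^2+g(\phi)^2/r^2)\,re^\beta dr$; $\beta$ is bounded above and below by constants depending only on the initial data. *)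

(* Defs.v *)
From Stdlib Require Import Reals Lra.
Open Scope R_scope.

Definition improper_int_0_inf (f : R -> R) (l : R) : Prop :=
  (forall X, 0 <= X -> inhabited (Riemann_integrable f 0 X)) /\
  (forall eps, 0 < eps -> exists M, forall X (pr : Riemann_integrable f 0 X),
       M <= X -> Rabs (RiemannInt pr - l) < eps).

(* Target warping function: g smooth (here: differentiable everywhere), odd,
   g'(0) = 1. *)
Definition admissible_g (g : R -> R) : Prop :=
  (forall x, exists l, derivable_pt_lim g x l) /\ (forall x, g (- x) = - g x) /\ derivable_pt_lim g 0 1.

Definition wp_to_infinity (g : R -> R) : Prop :=
  forall M, exists X, forall x (pr : Riemann_integrable g 0 x),
    X <= x -> M <= RiemannInt pr.

(* Energy density at time t (integrand of E / (2 pi)), with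
   phit = d_t phi, phir = d_r phi. *)
Definition energy_density (g : R -> R) (alpha beta phi phit phir : R -> R -> R)
  (t r : R) : R :=
  / 2 * (exp (-2 * alpha t r) * (phit t r) ^ 2
         + exp (-2 * beta t r) * (phir t r) ^ 2
         + (g (phi t r)) ^ 2 / r ^ 2) * r * exp (beta t r).

(* Properties of a solution (alpha, beta, phi) on -1 <= t < 0, r >= 0, as used
   in the context: phi = rho o Phi >= 0, phi = 0 and alpha = beta = 0 on the axis,
   phit/phir are the partial derivatives of phi, energy conserved and equal to E0
   (the energy of the initial data), and beta bounded by B (a constant depending
   only on the initial data). *)
Definition ewm_solution (g : R -> R) (E0 B : R)
  (alpha beta phi phit phir : R -> R -> R) : Prop :=
  (forall t r, -1 <= t < 0 -> 0 <= r -> 0 <= phi t r) /\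
  (forall t, -1 <= t < 0 -> phi t 0 = 0 /\ alpha t 0 = 0 /\ beta t 0 = 0) /\
  (forall t r, -1 <= t < 0 -> 0 <= r ->
     derivable_pt_lim (fun s => phi s r) t (phit t r)) /\
  (forall t r, -1 <= t < 0 -> 0 < r ->
     derivable_pt_lim (fun s => phi t s) r (phir t r)) /\
  (forall t r, -1 <= t < 0 -> 0 < r -> continuity_pt (fun s => phir t s) r) /\
  (forall t, -1 <= t < 0 -> continuity_pt (fun s => phi t s) 0) /\
  (forall t r, -1 <= t < 0 -> 0 <= r -> Rabs (beta t r) <= B) /\
  (forall t, -1 <= t < 0 ->
     improper_int_0_inf (energy_density g alpha beta phi phit phir t) (E0 / (2 * PI))).

(* Main.v *)
Require Import Defs.
From Stdlib Require Import Reals Lra.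
From Coquelicot Require Import Coquelicot.
Open Scope R_scope.

Lemma dens_bound (a b pt pr gv s : R) : 0 < s ->
  Rabs (pr * gv) <= / 2 * (exp (-2 * a) * pt ^ 2 + exp (-2 * b) * pr ^ 2 + gv ^ 2 / s ^ 2) * s * exp b.
Proof.
  intros Hs.
  pose (u := exp (- b)).
  assert (Hu : 0 < u) by apply exp_pos.
  assert (E1 : exp (-2 * b) = u * u) by (unfold u; rewrite <- exp_plus; f_equal; ring).
  assert (E2 : exp b = / u) by (unfold u; rewrite exp_Ropp, Rinv_inv; auto).
  rewrite E1, E2.
  assert (Ha : 0 <= exp (-2 * a) * pt ^ 2) by (apply Rmult_le_pos; [left; apply exp_pos | apply pow2_ge_0]).
  pose (q := gv / s).
  assert (Hg : gv = q * s) by (unfold q; field; lra).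
  assert (Hq : gv ^ 2 / s ^ 2 = q * q) by (rewrite Hg; field; lra).
  rewrite Hq, Hg.
  assert (Key : 2 * u * Rabs (pr * q) <= u * u * pr ^ 2 + q * q).
  { rewrite Rabs_mult.
    assert (0 <= (u * Rabs pr - Rabs q) ^ 2) by apply pow2_ge_0.
    assert (Rabs pr ^ 2 = pr ^ 2) by (simpl; rewrite !Rmult_1_r, <- Rabs_mult; apply Rabs_right; nra).
    assert (Rabs q * Rabs q = q * q) by (rewrite <- Rabs_mult; apply Rabs_right; nra).
    nra. }
  replace (pr * (q * s)) with ((pr * q) * s) by ring.
  rewrite Rabs_mult, (Rabs_right s) by lra.
  apply Rmult_le_reg_r with (2 * u); [lra|].
  replace (/ 2 * (exp (-2 * a) * pt ^ 2 + u * u * pr ^ 2 + q * q) * s * / u * (2 * u))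
    with ((exp (-2 * a) * pt ^ 2 + u * u * pr ^ 2 + q * q) * s) by (field; lra).
  assert (0 <= Rabs (pr*q)) by apply Rabs_pos.
  nra.
Qed.

Lemma dens_nonneg (a b pt pr gv s : R) : 0 < s ->
  0 <= / 2 * (exp (-2 * a) * pt ^ 2 + exp (-2 * b) * pr ^ 2 + gv ^ 2 / s ^ 2) * s * exp b.
Proof.
  intros Hs. eapply Rle_trans; [apply (Rabs_pos (pr*gv)) | apply dens_bound; auto].
Qed.

Lemma cont_of_deriv (f : R -> R) x l : derivable_pt_lim f x l -> continuous f x.
Proof.
  intros H. exact (ex_derive_continuous f x (ex_intro _ l (proj2 (is_derive_Reals _ _ _) H))).
Qed.

Lemma W_derive (g : R -> R) : (forall x, continuous g x) ->
  forall x, is_derive (fun y => RInt g 0 y) x (g x).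
Proof.
  intros Hc x. apply (is_derive_RInt g (fun y => RInt g 0 y) 0); [|auto].
  exists (mkposreal 1 Rlt_0_1). intros y _. apply (@RInt_correct R_CompleteNormedModule).
  apply ex_RInt_continuous. intros; auto.
Qed.

Lemma key (g : R -> R) (E0 B : R) alpha beta phi phit phir :
  (forall x, continuous g x) ->
  ewm_solution g E0 B alpha beta phi phit phir ->
  forall t r, -1 <= t < 0 -> 0 <= r ->
  Rabs (RInt g 0 (phi t r)) <= E0 / (2 * PI) + 2.
Proof.
  intros Hg [Hpos [Hax [Hdt [Hdr [Hcr [Hc0 [HB Hint]]]]]]] t r Ht Hr.
  assert (HPI : 0 < PI) by apply PI_RGT_0.
  assert (HE : 0 <= E0 / (2 * PI) + 2 \/ True) by auto.
  destruct (Hax t Ht) as [H0 _].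
  destruct (Req_dec r 0) as [Er|Er].
  { subst r. rewrite H0, RInt_point. unfold zero; simpl.
    rewrite Rabs_R0. destruct (Hint t Ht) as [I1 I2].
    destruct (I2 1 Rlt_0_1) as [M HM].
    destruct (I1 (Rmax M 0) (Rle_trans _ _ _ (Rle_refl 0) (Rmax_r M 0))) as [pr].
    specialize (HM _ pr (Rmax_l M 0)).
    assert (0 <= RiemannInt pr).
    { rewrite <- RInt_Reals. apply RInt_ge_0. apply Rmax_r. apply ex_RInt_Reals_1; auto.
      intros x Hx. unfold energy_density. apply dens_nonneg. lra. }
    apply Rabs_def2 in HM. lra. }
  assert (Hr' : 0 < r) by lra.
  set (dens := energy_density g alpha beta phi phit phir t).
  set (h := fun s => RInt g 0 (phi t s)).
  assert (Hex : forall X, 0 <= X -> ex_RInt dens 0 X).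
  { intros X HX. destruct (Hint t Ht) as [I1 _]. destruct (I1 X HX) as [pr].
    apply ex_RInt_Reals_1; auto. }
  assert (Hdn : forall x, 0 < x -> 0 <= dens x).
  { intros x Hx. unfold dens, energy_density. apply dens_nonneg; auto. }
  assert (Hmono : forall a b, 0 <= a <= b -> RInt dens 0 a <= RInt dens 0 b).
  { intros a b Hab.
    rewrite <- (RInt_Chasles dens 0 a b).
    2: apply Hex; lra.
    2: apply (ex_RInt_Chasles_2 dens 0 a b); [lra | apply Hex; lra].
    unfold plus; simpl.
    assert (0 <= RInt dens a b).
    { apply RInt_ge_0. lra. apply (ex_RInt_Chasles_2 dens 0 a b); [lra | apply Hex; lra].
      intros; apply Hdn; lra. }
    lra. }
  assert (Hbound : RInt dens 0 r <= E0 / (2 * PI) + 1).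
  { destruct (Hint t Ht) as [I1 I2].
    destruct (I2 1 Rlt_0_1) as [M HM].
    assert (HX : 0 <= Rmax M r) by (eapply Rle_trans; [apply Hr | apply Rmax_r]).
    destruct (I1 _ HX) as [pr].
    specialize (HM _ pr (Rmax_l M r)).
    rewrite <- RInt_Reals in HM.
    apply Rabs_def2 in HM.
    assert (RInt dens 0 r <= RInt dens 0 (Rmax M r)) by (apply Hmono; split; [lra | apply Rmax_r]).
    fold dens in HM. lra. }
  assert (Hcont0 : exists d, 0 < d /\ forall s, 0 < s < d -> Rabs (h s) < 1).
  { assert (Hcw : continuity_pt (fun y => RInt g 0 y) (phi t 0)).
    { apply continuity_pt_filterlim.
      exact (ex_derive_continuous (fun y => RInt g 0 y) (phi t 0) (ex_intro _ (g (phi t 0)) (W_derive g Hg (phi t 0)))). }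
    assert (Hch : continuity_pt h 0).
    { apply (continuity_pt_comp (fun s => phi t s) (fun y => RInt g 0 y)); auto. }
    destruct (Hch 1 Rlt_0_1) as [d [Hd Hd']].
    exists d. split; auto. intros s Hs.
    assert (E : h 0 = 0).
    { unfold h. rewrite H0, RInt_point. reflexivity. }
    specialize (Hd' s). rewrite E in Hd'. simpl in Hd'. unfold R_dist in Hd'.
    replace (h s) with (h s - 0) by ring. apply Hd'. split.
    - unfold D_x, no_cond. split; auto. lra.
    - try rewrite Rminus_0_r; rewrite Rabs_right; lra. }
  destruct Hcont0 as [d [Hd Hhd]].
  set (eps := Rmin r (d / 2)).
  assert (Heps : 0 < eps <= r /\ eps < d).
  { unfold eps. split; [split|].
    - apply Rmin_glb_lt; lra.
    - apply Rmin_l.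
    - eapply Rle_lt_trans; [apply Rmin_r | lra]. }
  set (dh := fun s => phir t s * g (phi t s)).
  assert (Hder : forall s, 0 < s -> is_derive h s (dh s)).
  { intros s Hs. unfold h, dh.
    apply (is_derive_comp (fun y => RInt g 0 y) (fun s => phi t s)).
    - apply W_derive; auto.
    - apply is_derive_Reals. apply Hdr; auto. }
  assert (Hcdh : forall s, 0 < s -> continuous dh s).
  { intros s Hs. unfold dh. apply (continuous_mult (fun s => phir t s) (fun s => g (phi t s))).
    - apply continuity_pt_filterlim. apply Hcr; auto.
    - apply (continuous_comp (fun s => phi t s) g).
      + apply (cont_of_deriv _ _ (phir t s)). apply Hdr; auto.
      + apply Hg. }
  assert (Hftc : is_RInt dh eps r (minus (h r) (h eps))).
  { apply (@is_RInt_derive R_CompleteNormedModule h dh eps r).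
    - intros x Hx. rewrite Rmin_left, Rmax_right in Hx by lra. apply Hder. lra.
    - intros x Hx. rewrite Rmin_left, Rmax_right in Hx by lra. apply Hcdh. lra. }
  assert (Hexdh : ex_RInt dh eps r) by (eexists; eauto).
  assert (Hval : RInt dh eps r = h r - h eps) by (rewrite (@is_RInt_unique R_CompleteNormedModule dh eps r _ Hftc); reflexivity).
  assert (Hexabs : ex_RInt (fun s => Rabs (dh s)) eps r).
  { apply (@ex_RInt_continuous R_CompleteNormedModule). intros z Hz. rewrite Rmin_left, Rmax_right in Hz by lra.
    apply (continuous_comp dh Rabs). apply Hcdh; lra. apply continuous_Rabs. }
  assert (Hexd : ex_RInt dens eps r) by (apply (ex_RInt_Chasles_2 dens 0 eps r); [lra | apply Hex; lra]).
  assert (H1 : Rabs (RInt dh eps r) <= RInt (fun s => Rabs (dh s)) eps r) by (apply abs_RInt_le; auto; lra).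
  assert (H2 : RInt (fun s => Rabs (dh s)) eps r <= RInt dens eps r).
  { apply RInt_le; auto; try lra. intros x Hx. unfold dh, dens, energy_density.
    apply dens_bound. lra. }
  assert (H3 : RInt dens eps r <= RInt dens 0 r).
  { rewrite <- (RInt_Chasles dens 0 eps r); [|apply (ex_RInt_Chasles_1 dens 0 eps r); [lra | apply Hex; lra] | auto].
    unfold plus; simpl.
    assert (0 <= RInt dens 0 eps).
    { apply RInt_ge_0. lra. apply (ex_RInt_Chasles_1 dens 0 eps r); [lra | apply Hex; lra].
      intros; apply Hdn; lra. }
    lra. }
  assert (H4 : Rabs (h eps) < 1) by (apply Hhd; lra).
  change (Rabs (h r) <= E0 / (2 * PI) + 2).
  replace (h r) with (RInt dh eps r + h eps) by (rewrite Hval; ring).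
  eapply Rle_trans; [apply Rabs_triang|]. lra.
Qed.

Theorem mainTheorem7 (kappa : R) (g : R -> R) :
  0 < kappa -> admissible_g g -> wp_to_infinity g ->
  forall E0 B : R, 0 <= E0 -> 0 <= B ->
  exists c : R, forall alpha beta phi phit phir : R -> R -> R,
    ewm_solution g E0 B alpha beta phi phit phir ->
    forall t r, -1 <= t < 0 -> 0 <= r -> Rabs (phi t r) <= c.
Proof.
  intros Hk [Hd _] Hwp E0 B HE0 HB.
  assert (Hg : forall x, continuous g x).
  { intros x. destruct (Hd x) as [l Hl]. exact (cont_of_deriv g x l Hl). }
  destruct (Hwp (E0 / (2 * PI) + 3)) as [X HX].
  exists (Rabs X). intros alpha beta phi phit phir Hsol t r Ht Hr.
  pose proof (key g E0 B alpha beta phi phit phir Hg Hsol t r Ht Hr) as Hk'.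
  assert (Hp : 0 <= phi t r) by (destruct Hsol as [Hp _]; auto).
  destruct (Rle_lt_dec X (phi t r)) as [HXle|HXlt].
  - exfalso.
    assert (Hex : ex_RInt g 0 (phi t r)) by (apply (@ex_RInt_continuous R_CompleteNormedModule); auto).
    pose (pr := ex_RInt_Reals_0 _ _ _ Hex).
    specialize (HX _ pr HXle). rewrite <- RInt_Reals in HX.
    pose proof (Rle_abs (RInt g 0 (phi t r))). lra.
  - rewrite Rabs_right by lra. eapply Rle_trans; [left; exact HXlt | apply RRle_abs].
Qed.
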